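(* Let $n\ge1$, let $w_{ij}\ge0$ for distinct $i,j\in\{1,\dots,n\}$, and for $a\in\{1,2\}^n$ let $W(a)=\sum_{i=1}^n\sum_{j:a_j\ne a_i}w_{ij}$. Let $a^*\in\arg\max_{a\in\{1,2\}^n}W(a)$. Then for every $a\in\{1,2\}^n$, $$\sum_{i=1}^n\big(W(a)-W(a^*_i,a_{-i})\big)\le 3W(a)-W(a^* ),$$ i.e. the common-interest game with welfare $W$ satisfies the smoothness inequality with $\lambda_c=1$, $\mu_c=3$.
   Context: For $a\in\{1,2\}^n$, $(a^*_i,a_{-i})$ denotes the joint action obtained from $a$ by replacing the $i$-th coordinate $a_i$ with $a^*_i$. *)

(* Defs.v *)
From mathcomp Require Import all_boot all_order all_algebra.
Set Implicit Arguments. Unset Strict Implicit. Unset Printing Implicit Defensive.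
Import Order.TTheory GRing.Theory Num.Theory.
Local Open Scope ring_scope.

(* Joint action profiles a in {1,2}^n, encoded as finite functions 'I_n -> 'I_2
   (action 1 <-> ord0, action 2 <-> 1). *)
Definition profile (n : nat) := {ffun 'I_n -> 'I_2}.

Definition welfare (R : nzRingType) (n : nat) (w : 'I_n -> 'I_n -> R)
    (a : profile n) : R :=
  \sum_(i < n) \sum_(j < n | a j != a i) w i j.

Definition deviate (n : nat) (a : profile n) (i : 'I_n) (x : 'I_2) : profile n :=
  [ffun j => if j == i then x else a j].

(* Main.v *)
Require Import Defs.
From mathcomp Require Import all_boot all_order all_algebra.
From mathcomp Require Import ring lra.
Import Order.TTheory GRing.Theory Num.Theory.
Local Open Scope ring_scope.

Lemma welfareE (R : realFieldType) (n : nat) (w : 'I_n -> 'I_n -> R) (a : profile n) :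
  welfare w a = \sum_(k < n) \sum_(j < n) w k j * (a j != a k)%:R.
Proof.
rewrite /welfare; apply: eq_bigr => k _; rewrite big_mkcond /=.
by apply: eq_bigr => j _; case: (a j != a k); rewrite ?mulr1 ?mulr0.
Qed.

Lemma pair_ineq (R : realFieldType) (x y u v : 'I_2) :
  ((y != x)%:R - (y != u)%:R) + ((y != x)%:R - (v != x)%:R)
   <= 3 * (y != x)%:R - (v != u)%:R :> R.
Proof.
case: x => [[|[|//]]] ?; case: y => [[|[|//]]] ?;
case: u => [[|[|//]]] ?; case: v => [[|[|//]]] ?;
rewrite /= ?subrr ?add0r ?addr0 ?mulr0 ?mulr1 ?sub0r ?subr0; lra.
Qed.

Theorem mainTheorem8 (R : realFieldType) (n : nat) (hn : (1 <= n)%N)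
    (w : 'I_n -> 'I_n -> R)
    (hw : forall i j : 'I_n, i != j -> 0 <= w i j)
    (astar : profile n)
    (hmax : forall b : profile n, welfare w b <= welfare w astar) :
  forall a : profile n,
    \sum_(i < n) (welfare w a - welfare w (deviate a i (astar i)))
      <= 3 * welfare w a - welfare w astar.
Proof.
move=> a.
have -> : \sum_(i < n) (welfare w a - welfare w (deviate a i (astar i))) =
  \sum_(k < n) \sum_(j < n) w k j * \sum_(i < n)
     ((a j != a k)%:R - (deviate a i (astar i) j != deviate a i (astar i) k)%:R).
  under eq_bigr => i _.
    rewrite !welfareE -sumrB; under eq_bigr => k _ do rewrite -sumrB.
    over.
  rewrite exchange_big /=; apply: eq_bigr => k _.
  rewrite exchange_big /=; apply: eq_bigr => j _.
  by rewrite mulr_sumr; apply: eq_bigr => i _; rewrite mulrBr.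
rewrite !welfareE mulr_sumr -sumrB; apply: ler_sum => k _.
rewrite mulr_sumr -sumrB; apply: ler_sum => j _.
have [->|njk] := eqVneq j k.
  rewrite big1 ?eqxx ?mulr0 ?subrr //; by move=> i _; rewrite eqxx subrr.
rewrite [3 * _]mulrCA -mulrBr; apply: ler_wpM2l; first by apply: hw; rewrite eq_sym.
rewrite (bigD1 k) //= (bigD1 j) //= big1; last first.
  move=> i /andP[nik nij]; rewrite !ffunE; rewrite eq_sym in nik; rewrite eq_sym in nij.
  by rewrite (negbTE nik) (negbTE nij) subrr.
rewrite !ffunE !eqxx addr0; do 2 (case: ifP => [/eqP E|_]; first by rewrite E eqxx in njk).
exact: pair_ineq.
Qed.
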